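(* Fix $\varepsilon>0$, put $t^{(a,b)}:=\frac{1-b}a$, let $Z_0^N$ start at $\lfloor N/\sqrt{\log N}\rfloor$, and let $Y_0^N(t):=\log_N^+\big(Z_0^N(t\varphi_N^{-1}\log N)\big)$ for $t\in[0,t^{(a,b)}+\varepsilon]$. Define $\widetilde Y_0^N(t):=\max_{t\le u\le t^{(a,b)}+\varepsilon}Y_0^N(u)$. Then $$\sup_{0\le t\le t^{(a,b)}+\varepsilon}\big|\widetilde Y_0^N(t)-Y_0^N(t)\big|\to0\quad\text{in probability as }N\to\infty.$$
   Context: Standing assumptions: $a>0$, $0<\varphi_N\le1$, $-\log_N\varphi_N\to b\in[0,1)$. $Z_0^N$ is the Markov chain on $\mathbb N_0$ jumping $k\to k+1$ at rate $k$ and $k\to k-1$ at rate $(1+a\varphi_N)k$. $\log_N^+(x):=\max\{\log x/\log N,0\}$ for $x>0$, $\log_N^+(0):=0$. *)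

(* Defs.v *)
From HB Require Import structures.
From mathcomp Require Import all_boot all_order all_algebra.
From mathcomp Require Import all_classical all_reals all_analysis.
Set Implicit Arguments. Unset Strict Implicit. Unset Printing Implicit Defensive.
Import Order.TTheory GRing.Theory Num.Theory.
Import numFieldNormedType.Exports.
Local Open Scope classical_set_scope.
Local Open Scope ring_scope.

Section Defs.
Variable R : realType.

Definition logNp (N k : nat) : R :=
  if k is 0 then 0 else Num.max (ln (k%:R) / ln (N%:R)) 0.

(* Pathwise (jump chain / holding time) construction of the Markov chain on N_0
   jumping k -> k+1 at rate k and k -> k-1 at rate (1 + a*phi) k.
   From state k > 0 the total rate is (2 + a*phi) k; the holding time is
   e / ((2 + a*phi) k) with e ~ Exp(1); the jump is upward iff u < 1/(2 + a*phi)
   with u ~ Unif[0,1]. State 0 is absorbing (its holding time, 1, is an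
   irrelevant convention since the state never changes afterwards). *)
Fixpoint jstate (a phi : R) (z0 : nat) (U : nat -> R) (n : nat) : nat :=
  match n with
  | 0 => z0
  | m.+1 => let k := jstate a phi z0 U m in
            if k == 0%N then 0%N
            else if U m < (2 + a * phi)^-1 then k.+1 else k.-1
  end.

Definition hold (a phi : R) (k : nat) (e : R) : R :=
  if k is 0 then 1 else e / ((2 + a * phi) * k%:R).

Definition jtime (a phi : R) (z0 : nat) (E U : nat -> R) (n : nat) : R :=
  \sum_(m < n) hold a phi (jstate a phi z0 U m) (E m).

(* Value of the chain at time t: the state after the last jump at or before t.
   On the (null) explosion event, the value 0 is an arbitrary convention. *)
Definition chain (a phi : R) (z0 : nat) (E U : nat -> R) (t : R) : nat :=
  match pselect (exists n, (fun n => t < jtime a phi z0 E U n.+1) n) with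
  | left H => jstate a phi z0 U (@ex_minn (fun n => t < jtime a phi z0 E U n.+1) H)
  | right _ => 0%N
  end.

Definition mutually_independent d (Omega : measurableType d)
    (P : probability Omega R) (I : eqType) (X : I -> Omega -> R) : Prop :=
  forall (J : seq I) (B : I -> set R), uniq J ->
    (forall i, measurable (B i)) ->
    P [set w | forall i, i \in J -> B i (X i w)] =
    (\prod_(i <- J) fine (P (X i @^-1` B i)))%:E.

End Defs.

(* Main.v *)
Require Import Defs.
From HB Require Import structures.
From mathcomp Require Import all_boot all_order all_algebra.
From mathcomp Require Import all_classical all_reals all_analysis.
From mathcomp Require Import ring lra.
Set Implicit Arguments. Unset Strict Implicit. Unset Printing Implicit Defensive.
Import Order.TTheory GRing.Theory Num.Theory.
Import numFieldNormedType.Exports.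
Local Open Scope classical_set_scope.
Local Open Scope ring_scope.
Definition wstep (k : nat) (b : bool) : nat :=
  if k == 0%N then 0%N else if b then k.+1 else k.-1.

Definition sstep (x : nat * nat) (b : bool) : nat * nat :=
  (wstep x.1 b, minn x.2 (wstep x.1 b)).

Definition isbad (R : realType) (K : R) (x : nat * nat) : bool :=
  (0 < x.2)%N && (K * x.2%:R <= x.1%:R).

Fixpoint badrun (R : realType) (K : R) (x : nat * nat) (s : seq bool) : bool :=
  match s with
  | [::] => isbad K x
  | b :: s' => isbad K x || badrun K (sstep x b) s'
  end.

Fixpoint allseq (n : nat) : seq (seq bool) :=
  match n with
  | 0 => [:: [::]]
  | n.+1 => [seq true :: s | s <- allseq n] ++ [seq false :: s | s <- allseq n]
  end.

Definition wt (R : realType) (p : R) (s : seq bool) : R :=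
  \prod_(b <- s) (if b then p else 1 - p).

Definition Fb (R : realType) (K p : R) (n : nat) (x : nat * nat) : R :=
  \sum_(s <- allseq n) (wt p s * (badrun K x s)%:R).

Definition Vf (R : realType) (K : R) (x : nat * nat) : R :=
  if x.2 == 0%N then 0 else (x.1%:R / x.2%:R + ln (x.2%:R)) / K.

Lemma sum_wt (R : realType) (p : R) n : \sum_(s <- allseq n) wt p s = 1.
Proof.
elim: n => [|n IH] /=; first by rewrite big_seq1 /wt big_nil.
rewrite big_cat !big_map /=.
under eq_bigr do rewrite /wt big_cons.
under [X in _ + X]eq_bigr do rewrite /wt big_cons.
by rewrite -!mulr_sumr IH !mulr1 addrC subrK.
Qed.

Lemma Fb_S (R : realType) (K p : R) n x :
  Fb K p n.+1 x = if isbad K x then 1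
    else p * Fb K p n (sstep x true) + (1 - p) * Fb K p n (sstep x false).
Proof.
rewrite /Fb /= big_cat !big_map /=.
under eq_bigr do rewrite /wt big_cons.
under [X in _ + X]eq_bigr do rewrite /wt big_cons.
case: (isbad K x) => /=.
  under eq_bigr do rewrite mulr1.
  under [X in _ + X]eq_bigr do rewrite mulr1.
  by rewrite -!mulr_sumr !sum_wt !mulr1 addrC subrK.
by rewrite !mulr_sumr; congr (_ + _); apply: eq_bigr => s _; rewrite mulrA.
Qed.

Lemma Vf_ge0 (R : realType) (K : R) x : 0 < K -> 0 <= Vf K x.
Proof.
move=> K0; rewrite /Vf; case: eqP => // /eqP r0.
apply: divr_ge0; last exact: ltW.
apply: addr_ge0; first by apply: divr_ge0.
by apply: ln_ge0; rewrite ler1n lt0n.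
Qed.

Lemma Vf_bad (R : realType) (K : R) x : 0 < K -> isbad K x -> 1 <= Vf K x.
Proof.
move=> K0 /andP[r0 Kr]; rewrite /Vf; case: eqP => [r0'|_]; first by rewrite r0' in r0.
have rp : 0 < x.2%:R :> R by rewrite ltr0n.
rewrite ler_pdivlMr // mul1r.
apply: (@le_trans _ _ (x.1%:R / x.2%:R)).
  by rewrite ler_pdivlMr // mulrC.
by rewrite lerDl; apply: ln_ge0; rewrite ler1n.
Qed.

Lemma super_aux (R : realType) (K p A B C : R) : 0 < K ->
  p * A + (1 - p) * B <= C -> p * (A / K) + (1 - p) * (B / K) <= C / K.
Proof.
move=> K0 h; rewrite !mulrA -mulrDl ler_pM2r ?invr_gt0 //.
Qed.

Lemma ln_pred_le (R : realType) (r : nat) : (1 < r)%N ->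
  ln (r.-1%:R : R) <= ln (r%:R) - r%:R^-1.
Proof.
move=> r1.
have rp : 0 < r%:R :> R by rewrite ltr0n; apply: ltnW.
have -> : (r.-1%:R : R) = r%:R * (1 - r%:R^-1).
  rewrite mulrDr mulr1 mulrN divff ?gt_eqF //.
  by rewrite -{2}(prednK (ltnW r1)) -natr1 addrK.
rewrite lnM ?posrE //; last first.
  rewrite subr_gt0 invf_lt1 // ltr1n //.
rewrite lerD2l; apply: le_ln1Dx.
rewrite ltrN2 invf_lt1 // ltr1n //.
Qed.

Lemma Vf_super (R : realType) (K p : R) x : 0 < K -> 0 <= p <= 2^-1 ->
  (x.2 <= x.1)%N ->
  p * Vf K (sstep x true) + (1 - p) * Vf K (sstep x false) <= Vf K x.
Proof.
move=> K0 /andP[p0 p2]; case: x => z r /= rz.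
rewrite /Vf /sstep /wstep /=.
have [->|r0] := eqVneq r 0%N.
  by rewrite !min0n /= !mulr0 addr0.
have z0 : (z != 0)%N by apply: contra_neq r0 => z0; apply/eqP; rewrite -leqn0 -z0.
rewrite (negbTE z0) ?(negbTE r0).
have rp : 0 < r%:R :> R by rewrite ltr0n lt0n.
have -> : minn r z.+1 = r by apply/minn_idPl; apply: leqW.
rewrite (negbTE r0).
have lnr0 : 0 <= ln (r%:R : R) by apply: ln_ge0; rewrite ler1n lt0n.
have [zr|zr] := ltnP r z.
  have -> : minn r z.-1 = r by apply/minn_idPl; rewrite -ltnS prednK // lt0n.
  rewrite (negbTE r0); apply: super_aux => //.
  have -> : (z.-1%:R : R) = z%:R - 1 by rewrite -{2}(prednK (leq_ltn_trans (leq0n _) zr)) -natr1 addrK.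
  rewrite -natr1 !mulrDl mulNr mul1r.
  have ir : 0 < r%:R^-1 :> R by rewrite invr_gt0.
  nra.
have zr' : z = r by apply/eqP; rewrite eqn_leq zr rz.
subst z.
have -> : minn r r.-1 = r.-1 by apply/minn_idPr; apply: leq_pred.
have [r1|r1] := eqVneq r 1%N.
  subst r => /=; rewrite mulr0 addr0 divr1 ln1 addr0.
  rewrite divr1 addr0 mulrA ler_pM2r ?invr_gt0 //; lra.
have r1' : (1 < r)%N by rewrite ltn_neqAle eq_sym r1 lt0n.
have -> : (r.-1 == 0%N) = false by apply/negbTE; rewrite -lt0n -ltnS prednK // lt0n.
apply: super_aux => //.
have hl := ln_pred_le R r1'.
have rm1 : (0 < r.-1%:R :> R) by rewrite ltr0n -ltnS prednK // ltnW.
have e1 : r.+1%:R / r%:R = 1 + r%:R^-1 :> R by rewrite -natr1 mulrDl divff ?gt_eqF // mul1r.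
rewrite e1 !divff ?gt_eqF //.
have ir : 0 < r%:R^-1 :> R by rewrite invr_gt0.
have hq : 0 <= 1 - p by lra.
have := ler_wpM2l hq hl.
nra.
Qed.

Lemma Fb_le (R : realType) (K p : R) n x : 0 < K -> 0 <= p <= 2^-1 ->
  (x.2 <= x.1)%N -> Fb K p n x <= Vf K x.
Proof.
move=> K0 hp; elim: n x => [|n IH] x rz.
  rewrite /Fb /= big_seq1 /wt big_nil mul1r.
  change (badrun K x [::]) with (isbad K x).
  have := @Vf_bad _ K x K0; case: (isbad K x) => h; [exact: h|exact: Vf_ge0].
rewrite Fb_S; have := @Vf_bad _ K x K0; case: (isbad K x) => h /=; first exact: h.
have [p0 p2] := andP hp.
apply: le_trans (Vf_super _ hp rz) => //.
apply: lerD; apply: ler_wpM2l.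
- exact: p0.
- by apply: IH; rewrite /sstep /= geq_minr.
- lra.
- by apply: IH; rewrite /sstep /= geq_minr.
Qed.
Definition mfib d (Om : measurableType d) (f : Om -> nat) :=
  forall k, measurable [set w | f w = k].

Lemma mpre d (Om : measurableType d) (R : realType) (f : Om -> R) (Y : set R) :
  measurable_fun setT f -> measurable Y -> measurable (f @^-1` Y).
Proof. by move=> mf mY; rewrite -[_ @^-1` _]setTI; apply: mf. Qed.

Lemma mconst d (Om : measurableType d) (P : Prop) : measurable [set _ : Om | P].
Proof.
case: (pselect P) => h.
  by rewrite (_ : [set _ | P] = setT) //; apply/seteqP; split.
by rewrite (_ : [set _ | P] = set0) //; apply/seteqP; split.
Qed.

Lemma mfib_comp_R d (Om : measurableType d) (R : realType) (g : Om -> nat)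
  (F : nat -> Om -> R) : mfib g -> (forall k, measurable_fun setT (F k)) ->
  measurable_fun setT (fun w => F (g w) w).
Proof.
move=> mg mF _ Y mY; rewrite setTI.
rewrite (_ : _ @^-1` _ = \bigcup_k ([set w | g w = k] `&` (F k @^-1` Y))).
  apply: bigcupT_measurable => k; apply: measurableI; first exact: mg.
  exact: mpre.
apply/seteqP; split => w /=.
  by move=> h; exists (g w) => //.
by move=> [k _ [/= <-]].
Qed.

Lemma mfib_comp_N d (Om : measurableType d) (g : Om -> nat)
  (F : nat -> Om -> nat) : mfib g -> (forall k, mfib (F k)) ->
  mfib (fun w => F (g w) w).
Proof.
move=> mg mF j.
rewrite (_ : [set w | _ = j] = \bigcup_k ([set w | g w = k] `&` [set w | F k w = j])).
  apply: bigcupT_measurable => k; apply: measurableI; [exact: mg|exact: mF].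
apply/seteqP; split => w /=.
  by move=> h; exists (g w) => //.
by move=> [k _ [/= <-]].
Qed.

Lemma mfib_bool d (Om : measurableType d) (h : Om -> bool) (f : bool -> nat) :
  measurable [set w | h w] -> mfib (fun w => f (h w)).
Proof.
move=> mh k.
rewrite (_ : [set w | _ = k] = ([set w | h w] `&` [set _ | f true = k]) `|`
   (~` [set w | h w] `&` [set _ | f false = k])).
  apply: measurableU; apply: measurableI => //; try exact: mconst.
  exact: measurableC.
apply/seteqP; split => w /=.
  by case: (h w) => /= fe; [left|right].
by case: (h w) => /= -[[]|[]].
Qed.

Lemma mfib_cst d (Om : measurableType d) (n : nat) : mfib (fun _ : Om => n).
Proof. move=> k; exact: mconst. Qed.

Lemma mfib_measurable_fun d (Om : measurableType d) (R : realType) (g : Om -> nat)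
  (h : nat -> R) : mfib g -> measurable_fun setT (fun w => h (g w)).
Proof. move=> mg; apply: (@mfib_comp_R _ _ _ g (fun k _ => h k)) => // k; exact: measurable_cst. Qed.

Lemma mlt d (Om : measurableType d) (R : realType) (f : Om -> R) (c : R) :
  measurable_fun setT f -> measurable [set w | f w < c].
Proof.
move=> mf; rewrite (_ : [set w | _] = f @^-1` `]-oo, c[); first by apply: mpre => //; exact: measurable_itv.
by apply/seteqP; split => w /=; rewrite in_itv /=.
Qed.

Lemma mgt d (Om : measurableType d) (R : realType) (f : Om -> R) (c : R) :
  measurable_fun setT f -> measurable [set w | c < f w].
Proof.
move=> mf; rewrite (_ : [set w | _] = f @^-1` `]c, +oo[); first by apply: mpre => //; exact: measurable_itv.
by apply/seteqP; split => w /=; rewrite in_itv /= andbT.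
Qed.

Lemma mle d (Om : measurableType d) (R : realType) (f : Om -> R) (c : R) :
  measurable_fun setT f -> measurable [set w | f w <= c].
Proof.
move=> mf; rewrite (_ : [set w | _] = f @^-1` `]-oo, c]); first by apply: mpre => //; exact: measurable_itv.
by apply/seteqP; split => w /=; rewrite in_itv /=.
Qed.

Lemma mfib_select d (Om : measurableType d) (P : nat -> Om -> bool) (h : nat -> Om -> nat) :
  (forall n, measurable [set w | P n w]) -> (forall n, mfib (h n)) ->
  mfib (fun w => match pselect (exists n, P n w) with
                 | left H => h (ex_minn H) w | right _ => 0%N end).
Proof.
move=> mP mh k.
rewrite (_ : [set w | _ = k] =
  (\bigcup_n ([set w | P n w] `&` \bigcap_m [set w | (m < n)%N -> ~~ P m w]
               `&` [set w | h n w = k])) `|`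
  ([set _ | k = 0%N] `&` \bigcap_n [set w | ~~ P n w])).
  apply: measurableU.
    apply: bigcupT_measurable => n; apply: measurableI; last exact: mh.
    apply: measurableI => //; apply: bigcapT_measurable => m.
    case: (ltnP m n) => mn.
      rewrite (_ : [set w | _] = ~` [set w | P m w]); first exact: measurableC.
      by apply/seteqP; split => w /=; [move=> /(_ isT) /negP|move=> /negP ->].
    rewrite (_ : [set w | _] = setT) //.
    by apply/seteqP; split => w //=; rewrite ltnNge mn.
  apply: measurableI; first exact: mconst.
  apply: bigcapT_measurable => n.
  rewrite (_ : [set w | _] = ~` [set w | P n w]); first exact: measurableC.
  by apply/seteqP; split => w /= /negP.
apply/seteqP; split => w /=.
  case: pselect => [H|H].
    case: ex_minnP => n Pn mn <-; left; exists n => //; split => //; split => //.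
    move=> m _ /= mlt; apply/negP => Pm.
    by have := mn _ Pm; rewrite leqNgt mlt.
  move=> <-; right; split => // n _ /=; apply/negP => Pn; apply: H; by exists n.
case: pselect => [H|H].
  case: ex_minnP => n Pn mn [[m _ [[Pm mm] <-]]|[_ /(_ (n) I) /negP]//].
  suff -> : n = m by [].
  apply/eqP; rewrite eqn_leq mn //=; rewrite leqNgt; apply/negP => mlt.
  by have := mm n I mlt; rewrite Pn.
move=> [[m _ [[Pm _] _]]|[-> _]//]; exfalso; apply: H; by exists m.
Qed.
Lemma msup d (Om : measurableType d) (R : realType) (h : nat -> Om -> R) :
  (forall k, measurable_fun setT (h k)) ->
  measurable_fun setT (fun w => sup (range (fun k => h k w))).
Proof.
move=> mh.
set B := [set w | has_ubound (range (fun k => h k w))].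
have mB : measurable B.
  rewrite (_ : B = \bigcup_(M : nat) \bigcap_k [set w | h k w <= M%:R]).
    by apply: bigcupT_measurable => M; apply: bigcapT_measurable => k; exact: mle.
  apply/seteqP; split => w /=.
    move=> [M hM]; exists (Num.Def.archi_bound `|M|) => // k _ /=.
    have hk : h k w <= M by apply: hM; exists k.
    apply: le_trans hk _.
    apply: le_trans (ler_norm M) _; apply: ltW; apply: archi_boundP.
    exact: normr_ge0.
  by move=> [M _ hM]; exists M%:R => _ [k _ <-]; apply: hM.
have eqs : (fun w => sup (range (fun k => h k w))) =
   (fun w => sups (fun k => h k w) 0).
  apply: funext => w; rewrite /sups; congr sup; apply/seteqP; split => x /=.
    by move=> [k _ <-]; exists k.
  by move=> [k _ <-]; exists k.
move=> _ Y mY; rewrite setTI.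
rewrite (_ : _ @^-1` _ = (B `&` ((fun w => sup (range (fun k => h k w))) @^-1` Y))
   `|` (~` B `&` [set _ | Y 0])).
  apply: measurableU; last by apply: measurableI; [exact: measurableC|exact: mconst].
  rewrite eqs; apply: (@measurable_realfun.measurable_fun_sups _ _ _ B (fun k w => h k w) 0) => //.
  by move=> k; apply: measurable_funS (mh k).
apply/seteqP; split => w /=.
  move=> Yw; case: (pselect (B w)) => Bw; first by left.
  right; split => //; move: Yw; rewrite sup_out //.
  by move=> [_ ub]; apply: Bw.
move=> [[]//|[Bw Y0]]; rewrite sup_out //.
by move=> [_ ub]; apply: Bw.
Qed.
Lemma mfib_jstate d (Om : measurableType d) (R : realType) (a phi : R) z0
  (U : nat -> Om -> R) n : (forall n, measurable_fun setT (U n)) ->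
  mfib (fun w => jstate a phi z0 (fun n => U n w) n).
Proof.
move=> mU; elim: n => [|n IH]; first exact: mfib_cst.
have -> : (fun w => jstate a phi z0 (fun n => U n w) n.+1) =
  (fun w => (fun k w => (fun b : bool => if k == 0%N then 0%N else if b then k.+1 else k.-1)
      (U n w < (2 + a * phi)^-1)) (jstate a phi z0 (fun n => U n w) n) w) by [].
apply: (@mfib_comp_N _ _ (fun w => jstate a phi z0 (fun n => U n w) n)
  (fun k w => (fun b : bool => if k == 0%N then 0%N else if b then k.+1 else k.-1)
      (U n w < (2 + a * phi)^-1))) => // k.
exact: (@mfib_bool _ _ (fun w => U n w < (2 + a * phi)^-1)
  (fun b : bool => if k == 0%N then 0%N else if b then k.+1 else k.-1) (mlt _ (mU n))).
Qed.

Lemma mjtime d (Om : measurableType d) (R : realType) (a phi : R) z0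
  (E U : nat -> Om -> R) n : (forall n, measurable_fun setT (U n)) ->
  (forall n, measurable_fun setT (E n)) ->
  measurable_fun setT (fun w => jtime a phi z0 (fun n => E n w) (fun n => U n w) n).
Proof.
move=> mU mE; elim: n => [|n IH].
  rewrite /jtime; under eq_fun do rewrite big_ord0; exact: measurable_cst.
rewrite /jtime; under eq_fun do rewrite big_ord_recr /=.
apply: measurable_realfun.measurable_funD; first exact: IH.
apply: (@mfib_comp_R _ _ _ (fun w => jstate a phi z0 (fun n => U n w) n)
  (fun k w => hold a phi k (E n w))); first exact: mfib_jstate.
case=> [|k] /=; first exact: measurable_cst.
have -> : (fun w => E n w / ((2 + a * phi) * k.+1%:R)) =
   (E n) \* (cst ((2 + a * phi) * k.+1%:R)^-1) by [].
apply: measurable_realfun.measurable_funM => //; exact: measurable_cst.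
Qed.

Lemma mfib_chain d (Om : measurableType d) (R : realType) (a phi : R) z0
  (E U : nat -> Om -> R) (t : R) : (forall n, measurable_fun setT (U n)) ->
  (forall n, measurable_fun setT (E n)) ->
  mfib (fun w => chain a phi z0 (fun n => E n w) (fun n => U n w) t).
Proof.
move=> mU mE; rewrite /chain.
apply: (@mfib_select _ _ (fun n w => t < jtime a phi z0 (fun n => E n w) (fun n => U n w) n.+1)
   (fun n w => jstate a phi z0 (fun n => U n w) n)).
  by move=> n; apply: mgt; exact: mjtime.
by move=> n; exact: mfib_jstate.
Qed.

Lemma mY d (Om : measurableType d) (R : realType) (a phi : R) z0
  (E U : nat -> Om -> R) (h : nat -> R) (t : R) : (forall n, measurable_fun setT (U n)) ->
  (forall n, measurable_fun setT (E n)) ->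
  measurable_fun setT (fun w => h (chain a phi z0 (fun n => E n w) (fun n => U n w) t)).
Proof. by move=> mU mE; apply: mfib_measurable_fun; exact: mfib_chain. Qed.
Lemma chain_rconst (R : realType) (a phi : R) z0 (E U : nat -> R) (t : R) :
  exists2 t', t < t' & forall x, t <= x < t' -> chain a phi z0 E U x = chain a phi z0 E U t.
Proof.
rewrite /chain; case: pselect => [Ht|Ht].
  case: ex_minnP => n Pn mn.
  exists (jtime a phi z0 E U n.+1) => // x /andP[tx xJ].
  case: pselect => [Hx|Hx]; last by exfalso; apply: Hx; exists n.
  case: ex_minnP => m Pm mm; congr jstate.
  apply/eqP; rewrite eqn_leq mm //= mn //=.
  exact: le_lt_trans tx Pm.
exists (t + 1); first by rewrite ltrDl.
move=> x /andP[tx _]; case: pselect => [[n Pn]|//]; exfalso; apply: Ht.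
exists n; exact: le_lt_trans tx Pn.
Qed.

Lemma chain_mono (R : realType) (a phi : R) z0 (E U : nat -> R) (t u : R) :
  t <= u -> chain a phi z0 E U u = 0%N \/
  exists n m, [/\ (n <= m)%N, chain a phi z0 E U t = jstate a phi z0 U n &
                  chain a phi z0 E U u = jstate a phi z0 U m].
Proof.
move=> tu; rewrite /chain.
case: pselect => [Hu|Hu]; last by left.
right; case: pselect => [Ht|Ht]; last first.
  exfalso; case: Hu => n Pn; apply: Ht; exists n; exact: le_lt_trans tu Pn.
case: (ex_minnP Ht) => n Pn mn; case: (ex_minnP Hu) => m Pm mm.
exists n, m; split => //; apply: mn; exact: le_lt_trans tu Pm.
Qed.

Lemma jstate_abs (R : realType) (a phi : R) z0 (U : nat -> R) n m :
  (n <= m)%N -> jstate a phi z0 U n = 0%N -> jstate a phi z0 U m = 0%N.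
Proof.
move=> nm h; elim: m nm => [|m IH]; first by rewrite leqn0 => /eqP e; rewrite e in h.
move=> nm1; case: (ltnP n m.+1) => [nlt|nge].
  by move: (IH nlt) => /= e; rewrite e.
have e : n = m.+1 by apply/eqP; rewrite eqn_leq nm1 nge.
by rewrite -e.
Qed.
Definition bits (R : realType) (pp : R) (U : nat -> R) n := [seq U j < pp | j <- iota 0 n].

Lemma foldl_bitsS (R : realType) (pp : R) (U : nat -> R) x n :
  foldl sstep x (bits pp U n.+1) = sstep (foldl sstep x (bits pp U n)) (U n < pp).
Proof. by rewrite /bits -addn1 iotaD map_cat foldl_cat /=. Qed.

Lemma Xs_inv (R : realType) (a phi : R) z0 (U : nat -> R) n :
  let x := foldl sstep (z0, z0) (bits (2 + a * phi)^-1 U n) in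
  [/\ x.1 = jstate a phi z0 U n, (x.2 = 0%N -> x.1 = 0%N) &
      forall i, (i <= n)%N -> (x.2 <= jstate a phi z0 U i)%N].
Proof.
elim: n => [|n IH].
  by split => //= i; rewrite leqn0 => /eqP ->.
rewrite foldl_bitsS; move: IH => /=.
case: (foldl sstep (z0, z0) (bits (2 + a * phi)^-1 U n)) => z r /= [ez h0 hi].
rewrite /sstep /= -ez /wstep; split => //.
  case Hz: (z == 0%N) => //.
  rewrite /minn; case: ltnP => // _ r0.
  by move: Hz; rewrite h0.
move=> i; rewrite leq_eqVlt => /orP[/eqP ->|]; first by rewrite /= -ez geq_minr.
by rewrite ltnS => /hi; apply: leq_trans; rewrite geq_minl.
Qed.

Lemma notbad_fold (R : realType) (K : R) x s :
  ~~ badrun K x s -> ~~ isbad K (foldl sstep x s).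
Proof.
elim: s x => [|b s IH] x /=; first by [].
by rewrite negb_or => /andP[_ /IH].
Qed.

Lemma good_ratio (R : realType) (a phi K : R) z0 (U : nat -> R) :
  0 < K -> (forall n, ~~ badrun K (z0, z0) (bits (2 + a * phi)^-1 U n)) ->
  forall i m, (i <= m)%N -> (0 < jstate a phi z0 U i)%N ->
  (jstate a phi z0 U m)%:R < K * (jstate a phi z0 U i)%:R.
Proof.
move=> K0 hg i m im zi.
have := notbad_fold (hg m); have [e1 e2 e3] := Xs_inv a phi z0 U m.
move: e1 e2 e3; case: (foldl _ _ _) => z r /= e1 e2 e3.
rewrite /isbad /= negb_and -leqNgt -ltNge => /orP[|].
  rewrite leqn0 => /eqP r0; rewrite -e1 (e2 r0) mulr_gt0 // ltr0n //.
rewrite -e1 => zl; apply: (lt_le_trans zl); rewrite ler_pM2l // ler_nat; exact: e3.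
Qed.

Lemma badrun_cat (R : realType) (K : R) x s t : badrun K x s -> badrun K x (s ++ t).
Proof.
elim: s x => [|b s IH] x /=.
  by case: t => [|c t] //= ->.
by move=> /orP[->//|/IH ->]; rewrite orbT.
Qed.

Lemma size_allseq n s : s \in allseq n -> size s = n.
Proof.
elim: n s => [|n IH] s /=; first by rewrite inE => /eqP ->.
rewrite mem_cat => /orP[] /mapP [s' /IH <- ->] //.
Qed.

Lemma mem_allseq s : s \in allseq (size s).
Proof.
elim: s => [|b s IH] /=; first by rewrite inE.
rewrite mem_cat; case: b; apply/orP; [left|right]; apply/mapP; by exists s.
Qed.
Lemma real_ge_of (R : realType) (x c : R) : 0 <= x ->
  (forall e, 0 < e <= c -> c - e <= x) -> c <= x.
Proof.
move=> x0 h; rewrite leNgt; apply/negP => xc.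
have h2 : 0 < (c - x) / 2 <= c by apply/andP; split; lra.
have := h _ h2; lra.
Qed.


Lemma PUlt d (Om : measurableType d) (R : realType) (P : probability Om R) (V : Om -> R) c :
  measurable_fun setT V -> (forall x, 0 <= x <= 1 -> P [set w | V w <= x] = x%:E) ->
  0 <= c <= 1 -> P [set w | V w < c] = c%:E.
Proof.
move=> mV hV /andP[c0 c1].
have mA : measurable [set w | V w < c] by exact: mlt.
have hle : (P [set w | (V w < c)%R] <= c%:E)%E.
  rewrite -(hV c) ?c0 ?c1 //; apply: le_measure; rewrite ?inE //; first exact: mle.
  by move=> w /= wc; apply: ltW.
have fin : P [set w | V w < c] \is a fin_num.
  by rewrite ge0_fin_numE // (le_lt_trans hle) // ltey.
rewrite -(fineK fin); congr EFin; apply/eqP; rewrite eq_le.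
rewrite -lee_fin fineK // hle /=.
apply: real_ge_of; first by rewrite fine_ge0.
move=> e /andP[e0 ec]; rewrite -lee_fin fineK //.
rewrite -hV; last by apply/andP; split; lra.
apply: le_measure; rewrite ?inE //; first exact: mle.
by move=> w /= h; apply: (le_lt_trans h); lra.
Qed.

Lemma PUge d (Om : measurableType d) (R : realType) (P : probability Om R) (V : Om -> R) c :
  measurable_fun setT V -> (forall x, 0 <= x <= 1 -> P [set w | V w <= x] = x%:E) ->
  0 <= c <= 1 -> P [set w | c <= V w] = (1 - c)%:E.
Proof.
move=> mV hV hc.
rewrite (_ : [set w | c <= V w] = ~` [set w | V w < c]).
  by rewrite probability_setC ?(PUlt mV hV hc) //; exact: mlt.
by apply/seteqP; split => w /=; rewrite leNgt => /negP.
Qed.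

Definition Cyl d (Om : measurableType d) (R : realType) (pp : R) (U : nat -> Om -> R) (s : seq bool) :=
  [set w | bits pp (fun j => U j w) (size s) = s].

Lemma PCyl d (Om : measurableType d) (R : realType) (P : probability Om R) (E U : nat -> Om -> R) pp s :
  (forall n, measurable_fun setT (U n)) ->
  (forall n x, 0 <= x <= 1 -> P [set w | U n w <= x] = x%:E) ->
  mutually_independent P
    (fun i : nat + nat => match i with inl n => E n | inr n => U n end) ->
  0 <= pp <= 1 ->
  P (Cyl pp U s) = (wt pp s)%:E.
Proof.
move=> mU hU hind hpp.
pose J := [seq inr j | j <- iota 0 (size s)] : seq (nat + nat).
pose B := fun i : nat + nat => match i with
   | inl _ => setT
   | inr j => if nth false s j then [set` `]-oo, pp[] else [set` `[pp, +oo[] end.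
have uJ : uniq J by rewrite map_inj_uniq ?iota_uniq // => x y [].
have mB : forall i, measurable (B i).
  by case=> [k|j] /=; [exact: measurableT|case: ifP => _; exact: measurable_itv].
have := hind J B uJ mB.
rewrite (_ : [set w | _] = Cyl pp U s); last first.
  apply/seteqP; split => w /=.
    move=> h; apply: (@eq_from_nth _ false); first by rewrite size_map size_iota.
    move=> j; rewrite size_map size_iota => js.
    rewrite (nth_map 0%N) ?size_iota // nth_iota // add0n.
    have := h (inr j); rewrite map_f ?mem_iota //= => /(_ isT).
    by case: (nth false s j); rewrite /= in_itv /= ?andbT //; rewrite leNgt => /negbTE.
  move=> hb [k|j] //; rewrite mem_map; last by move=> x y [].
  rewrite mem_iota add0n => /andP[_ js] /=.
  rewrite -hb (nth_map 0%N) ?size_iota // nth_iota // add0n.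
  by case: ifP; rewrite /= in_itv /= ?andbT // leNgt => ->.
move=> ->; congr EFin.
rewrite big_map /wt (big_nth false) /index_iota subn0.
apply: eq_bigr => j _ /=.
case: (nth false s j).
  have e : U j @^-1` [set` `]-oo, pp[] = [set w | U j w < pp].
    by apply/seteqP; split => w /=; rewrite in_itv.
  by rewrite e (PUlt (mU j) (hU j)).
have e : U j @^-1` [set` `[pp, +oo[] = [set w | pp <= U j w].
  by apply/seteqP; split => w /=; rewrite in_itv /= andbT.
by rewrite e (PUge (mU j) (hU j)).
Qed.

Lemma in_bigsetU T (I : eqType) (l : seq I) (Pr : pred I) (F : I -> set T) w :
  (\big[setU/set0]_(s <- l | Pr s) F s) w <-> exists s, [/\ s \in l, Pr s & F s w].
Proof.
elim: l => [|x l IH]; first by rewrite big_nil; split => // -[s []].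
rewrite big_cons; case: ifP => Px; split.
- move=> [Fx|/IH [s [sl Ps Fs]]]; first by exists x; rewrite mem_head.
  by exists s; rewrite in_cons sl orbT.
- move=> [s []]; rewrite in_cons => /orP[/eqP ->|sl] Ps Fs; first by left.
  by right; apply/IH; exists s.
- by move=> /IH [s [sl Ps Fs]]; exists s; rewrite in_cons sl orbT.
- move=> [s []]; rewrite in_cons => /orP[/eqP ->|sl] Ps Fs; first by rewrite Ps in Px.
  by apply/IH; exists s.
Qed.

Lemma P_bigsetU d (Om : measurableType d) (R : realType) (P : probability Om R)
  (I : Type) (l : seq I) (Pr : pred I) (F : I -> set Om) :
  (forall s, measurable (F s)) ->
  (P (\big[setU/set0]_(s <- l | Pr s) F s) <= \sum_(s <- l | Pr s) P (F s))%E.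
Proof.
move=> mF; elim: l => [|x l IH]; first by rewrite !big_nil measure0.
rewrite !big_cons; case: ifP => // _.
apply: le_trans (measureU2 _ _ _) _ => //; first exact: bigsetU_measurable.
exact: leeD2l.
Qed.

Lemma mCyl d (Om : measurableType d) (R : realType) (U : nat -> Om -> R) (pp : R) s :
  (forall n, measurable_fun setT (U n)) -> measurable (Cyl pp U s).
Proof.
move=> mU; rewrite /Cyl.
  rewrite (_ : [set w | _] = \bigcap_j [set w | (j < size s)%N -> (U j w < pp) = nth false s j]).
    apply: bigcapT_measurable => j; case: (ltnP j (size s)) => js.
      case: (nth false s j).
        rewrite (_ : [set w | _] = [set w | U j w < pp]); first exact: mlt.
        by apply/seteqP; split => w /=; [move=> /(_ isT)|move=> ->].
      rewrite (_ : [set w | _] = ~` [set w | U j w < pp]); first by apply: measurableC; exact: mlt.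
      by apply/seteqP; split => w /=; [move=> /(_ isT) ->|move=> /negP/negbTE ->].
    rewrite (_ : [set w | _] = setT) //; apply/seteqP; split => w //= _.
  apply/seteqP; split => w /=.
    by move=> e j _ /= js; rewrite -e /bits (nth_map 0%N) ?size_iota // nth_iota.
  move=> h; apply: (@eq_from_nth _ false); first by rewrite size_map size_iota.
  move=> j; rewrite size_map size_iota => js.
  by rewrite (nth_map 0%N) ?size_iota // nth_iota // (h j I js).
Qed.

Lemma Bad_eq d (Om : measurableType d) (R : realType) (U : nat -> Om -> R) (pp : R) n (f : pred (seq bool)) :
  [set w | f (bits pp (fun j => U j w) n)] = \big[setU/set0]_(s <- allseq n | f s) Cyl pp U s.
Proof.
apply/seteqP; split => w /=.
  move=> h; apply/in_bigsetU; exists (bits pp (fun j => U j w) n); split => //.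
    have := mem_allseq (bits pp (fun j => U j w) n).
    by rewrite /bits size_map size_iota.
  by rewrite /Cyl /= /bits size_map size_iota.
move=> /in_bigsetU [s [sl bs]]; rewrite /Cyl /= => e.
by move: bs; rewrite -e (size_allseq sl).
Qed.

Lemma P_Bad d (Om : measurableType d) (R : realType) (P : probability Om R) (E U : nat -> Om -> R)
  (K pp : R) z0 n :
  (forall n, measurable_fun setT (U n)) ->
  (forall n x, 0 <= x <= 1 -> P [set w | U n w <= x] = x%:E) ->
  mutually_independent P
    (fun i : nat + nat => match i with inl n => E n | inr n => U n end) ->
  0 <= pp <= 1 ->
  (P [set w | badrun K (z0, z0) (bits pp (fun j => U j w) n)] <= (Fb K pp n (z0, z0))%:E)%E.
Proof.
move=> mU hU hind hpp.
have mC : forall s, measurable (Cyl pp U s) by move=> s; exact: mCyl.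
rewrite (@Bad_eq _ _ _ U pp n (fun s => badrun K (z0, z0) s)).
apply: le_trans (P_bigsetU _ _ _ mC) _.
under eq_bigr do rewrite (PCyl _ mU hU hind hpp).
rewrite sumEFin lee_fin /Fb big_mkcond /= le_eqVlt; apply/orP; left.
apply/eqP; apply: eq_bigr => s _; case: ifP => _; by rewrite ?mulr1 ?mulr0.
Qed.

Lemma P_BadU d (Om : measurableType d) (R : realType) (P : probability Om R) (E U : nat -> Om -> R)
  (K pp : R) z0 :
  (forall n, measurable_fun setT (U n)) ->
  (forall n x, 0 <= x <= 1 -> P [set w | U n w <= x] = x%:E) ->
  mutually_independent P
    (fun i : nat + nat => match i with inl n => E n | inr n => U n end) ->
  0 < K -> 0 <= pp <= 2^-1 ->
  and (measurable [set w | exists n, badrun K (z0, z0) (bits pp (fun j => U j w) n)])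
  (P [set w | exists n, badrun K (z0, z0) (bits pp (fun j => U j w) n)] <= (Vf K (z0, z0))%:E)%E.
Proof.
move=> mU hU hind K0 hpp.
have hpp1 : 0 <= pp <= 1 by move: hpp => /andP[? ?]; apply/andP; split => //; lra.
pose F n := [set w | badrun K (z0, z0) (bits pp (fun j => U j w) n)].
have mF : forall n, measurable (F n).
  move=> n; rewrite /F (@Bad_eq _ _ _ U pp n (fun s => badrun K (z0, z0) s)).
  by apply: bigsetU_measurable => s _; exact: mCyl.
have eU : [set w | exists n, badrun K (z0, z0) (bits pp (fun j => U j w) n)] = \bigcup_n F n.
  by apply/seteqP; split => w /= [n]; [move=> h; exists n|move=> _ h; exists n].
have mU' : measurable (\bigcup_n F n) by exact: bigcupT_measurable.
rewrite eU; split => //.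
have ndF : nondecreasing_seq F.
  move=> n m nm; apply/subsetPset => w; rewrite /F /= /bits => h.
  rewrite -(subnKC nm) iotaD map_cat; exact: badrun_cat.
have hc := @nondecreasing_cvg_mu _ _ _ P F mF mU' ndF.
rewrite -(cvg_lim _ hc) //; apply: lime_le.
  by apply/cvg_ex; eexists; exact: hc.
apply: nearW => n /=.
have hb := @P_Bad _ _ _ P E U K pp z0 n mU hU hind hpp1.
rewrite /F; apply: le_trans hb _.
by rewrite lee_fin; apply: Fb_le.
Qed.
Definition tt (R : realType) (t T : R) (k : nat) : R :=
  match k with
  | 0 => t
  | 1 => T
  | k'.+2 => match @unpickle rat k' with
             | Some q => if (t < (ratr q : R)) && (ratr q < T) then ratr q else t
             | None => t end
  end.

Definition to (R : realType) (T : R) (k : nat) : R :=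
  match k with
  | 0 => T
  | k'.+1 => match @unpickle rat k' with
             | Some q => if (0 <= (ratr q : R)) && (ratr q < T) then ratr q else T
             | None => T end
  end.

Definition rconst (R : realType) (f : R -> R) :=
  forall t, exists2 t', t < t' & forall x, t <= x < t' -> f x = f t.

Lemma rangeY (R : realType) (f : R -> R) (t T : R) : rconst f -> t <= T ->
  [set f u | u in `[t, T]] = range (fun k => f (tt t T k)).
Proof.
move=> rc tT; apply/seteqP; split => y /=.
  move=> [u]; rewrite in_itv /= => /andP[tu uT] <-.
  have [uT'|uT'] := eqVneq u T; first by exists 1%N => //; rewrite uT'.
  have uTl : u < T by rewrite lt_neqAle uT' uT.
  have [u' uu' hu'] := rc u.
  have um : u < Order.min u' T by rewrite lt_min uu' uTl.
  have [q] := rat_in_itvoo um; rewrite in_itv /= lt_min => /andP[uq /andP[qu' qT]].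
  exists (pickle q).+2 => //=; rewrite pickleK.
  rewrite (le_lt_trans tu uq) qT /=.
  by apply: hu'; rewrite qu' andbT ltW.
move=> [k _ <-]; exists (tt t T k) => //.
rewrite in_itv /=; case: k => [|[|k]] /=; first by rewrite lexx tT.
  by rewrite tT lexx.
case: (unpickle k) => [q|]; last by rewrite lexx tT.
by case: ifP => [/andP[tq qT]|_]; rewrite ?lexx ?tT ?ltW.
Qed.

Lemma rangeO (R : realType) (f : R -> R) (T : R) : rconst f -> 0 <= T ->
  [set `|sup [set f u | u in `[t, T]] - f t| | t in `[0, T]] =
  range (fun k => `|sup [set f u | u in `[to T k, T]] - f (to T k)|).
Proof.
move=> rc T0; apply/seteqP; split => y /=.
  move=> [t]; rewrite in_itv /= => /andP[t0 tT] <-.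
  have [tT'|tT'] := eqVneq t T; first by exists 0%N => //; rewrite tT'.
  have tTl : t < T by rewrite lt_neqAle tT' tT.
  have [t' tt' ht'] := rc t.
  have tm : t < Order.min t' T by rewrite lt_min tt' tTl.
  have [q] := rat_in_itvoo tm; rewrite in_itv /= lt_min => /andP[tq /andP[qt' qT]].
  exists (pickle q).+1 => //=; rewrite pickleK.
  rewrite (le_trans t0 (ltW tq)) qT /=.
  have fq : f (ratr q) = f t by apply: ht'; rewrite qt' andbT ltW.
  rewrite fq; congr (`| sup _ - _ |).
  apply/seteqP; split => z /= [u]; rewrite in_itv /= => /andP[h1 h2] <-.
    by exists u => //; rewrite in_itv /= h2 andbT (le_trans (ltW tq)).
  have [uq|qu] := ltP u (ratr q).
    exists (ratr q); first by rewrite in_itv /= lexx ltW.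
    by rewrite fq; apply/esym/ht'; rewrite h1 (lt_trans uq).
  by exists u => //; rewrite in_itv /= qu h2.
move=> [k _ <-]; exists (to T k) => //.
rewrite in_itv /=; case: k => [|k] /=; first by rewrite T0 lexx.
case: (unpickle k) => [q|]; last by rewrite T0 lexx.
by case: ifP => [/andP[q0 qT]|_]; rewrite ?lexx ?T0 ?q0 ?ltW.
Qed.

Lemma mS d (Om : measurableType d) (R : realType) (Yf : Om -> R -> R) (T delta : R) :
  (forall t, measurable_fun setT (fun w => Yf w t)) ->
  (forall w, rconst (Yf w)) -> 0 <= T ->
  measurable [set w | delta < sup [set `|sup [set Yf w u | u in `[t, T]] - Yf w t| | t in `[0, T]]].
Proof.
move=> mY rc T0.
have to_le : forall k, to T k <= T.
  case=> [|k] /=; first by [].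
  by case: (unpickle k) => [q|//]; case: ifP => [/andP[_ h]|_] //; apply: ltW.
apply: mgt.
have -> : (fun w => sup [set `|sup [set Yf w u | u in `[t, T]] - Yf w t| | t in `[0, T]]) =
  (fun w => sup (range (fun k => `|sup (range (fun j => Yf w (tt (to T k) T j))) - Yf w (to T k)|))).
  apply: funext => w; rewrite rangeO //; f_equal; f_equal; apply: funext => k.
  by rewrite rangeY.
apply: msup => k.
apply: measurableT_comp; first exact: measurable_realfun.normr_measurable.
apply: measurable_realfun.measurable_funB; last exact: mY.
by apply: msup => j; exact: mY.
Qed.
Lemma logNp_ge0 (R : realType) N k : 0 <= logNp R N k.
Proof. by case: k => [|k] //=; rewrite le_max lexx orbT. Qed.

Lemma logNp_pos (R : realType) N k : (0 < k)%N -> 0 < ln (N%:R : R) ->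
  logNp R N k = ln (k%:R) / ln (N%:R).
Proof.
case: k => [//|k] _ lN /=; apply/max_idPl.
by apply: divr_ge0; [apply: ln_ge0; rewrite ler1n|exact: ltW].
Qed.

Lemma logNp_step (R : realType) N (c : R) (z z' : nat) : 0 < ln (N%:R : R) -> 0 <= c ->
  (z = 0%N -> z' = 0%N) -> ((0 < z)%N -> z'%:R < expR (c * ln (N%:R)) * z%:R) ->
  logNp R N z' <= logNp R N z + c.
Proof.
move=> lN c0 h0 h1.
have [->|z'0] := eqVneq z' 0%N; first by rewrite /= addr_ge0 // logNp_ge0.
have z0 : (0 < z)%N by rewrite lt0n; apply: contra_neq z'0 => /h0.
rewrite !logNp_pos // ?lt0n //.
have := h1 z0; rewrite -(@ltr_ln R) ?posrE ?ltr0n ?lt0n // ?mulr_gt0 ?expR_gt0 ?ltr0n //.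
rewrite lnM ?posrE ?expR_gt0 ?ltr0n // expRK => hl.
rewrite ler_pdivrMr // mulrDl divfK ?gt_eqF //; apply: ltW; by rewrite addrC.
Qed.

Lemma sup_le_c (R : realType) (X : set R) (c : R) : 0 <= c ->
  (forall x, X x -> x <= c) -> sup X <= c.
Proof.
move=> c0 h; case: (pselect (X !=set0)) => [Xn|Xe].
  by apply: ge_sup => // x Xx; apply: h.
have -> : X = set0 by apply/seteqP; split => x // Xx; apply: Xe; exists x.
by rewrite sup0.
Qed.
Lemma rconst_Y (R : realType) (a phi : R) z0 (E U : nat -> R) (p L : R) (h : nat -> R) :
  0 < p -> 0 <= L -> rconst (fun t => h (chain a phi z0 E U (t / p * L))).
Proof.
move=> p0 L0 t.
set c := p^-1 * L.
have c0 : 0 <= c by apply: mulr_ge0 => //; rewrite invr_ge0 ltW.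
have eq1 : forall x, x / p * L = x * c by move=> x; rewrite /c mulrA.
have [s' ts' hs'] := chain_rconst a phi z0 E U (t * c).
set e := (s' - t * c) / (c + 1).
have e0 : 0 < e by apply: divr_gt0; [rewrite subr_gt0|lra].
have ee : e * (c + 1) = s' - t * c by rewrite /e divfK // gt_eqF //; lra.
exists (t + e); first by rewrite ltrDl.
move=> x /andP[tx xte]; rewrite !eq1; congr h; apply: hs'.
apply/andP; split; first by rewrite ler_wpM2r.
have : (x - t) * c <= e * c by apply: ler_wpM2r => //; lra.
nra.
Qed.

Lemma det_sup (R : realType) (a phi delta T : R) N z0 (E U : nat -> R) :
  0 < phi -> 0 < ln (N%:R : R) -> 0 < delta ->
  (forall n, ~~ badrun (expR (delta / 2 * ln (N%:R : R))) (z0, z0) (bits (2 + a * phi)^-1 U n)) ->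
  sup [set `|sup [set logNp R N (chain a phi z0 E U (u / phi * ln (N%:R : R))) | u in `[t, T]]
            - logNp R N (chain a phi z0 E U (t / phi * ln (N%:R : R)))| | t in `[0, T]] <= delta / 2.
Proof.
move=> p0 lN d0 hg.
set K := expR (delta / 2 * ln (N%:R : R)).
have K0 : 0 < K by apply: expR_gt0.
have hr := good_ratio K0 hg.
set Yf := fun t => logNp R N (chain a phi z0 E U (t / phi * ln (N%:R : R))).
have d2 : 0 <= delta / 2 by lra.
have step : forall t u, t <= u -> Yf u <= Yf t + delta / 2.
  move=> t u tu; rewrite /Yf.
  have : t / phi * ln (N%:R : R) <= u / phi * ln (N%:R : R).
    by apply: ler_wpM2r; [exact: ltW|apply: ler_wpM2r => //; rewrite invr_ge0 ltW].
  case/(chain_mono a phi z0 E U) => [->|[n [m [nm -> ->]]]].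
    by rewrite /= addr_ge0 // logNp_ge0.
  apply: logNp_step => //.
    by move=> h; apply: (jstate_abs nm).
  by move=> zn; apply: hr.
apply: sup_le_c => // y [t] tin <-; move: tin; rewrite /= in_itv /= => /andP[t0 tT].
change (`|sup [set Yf u | u in `[t, T]] - Yf t| <= delta / 2).
have hne : [set Yf u | u in `[t, T]] !=set0.
  by exists (Yf t); exists t => //=; rewrite in_itv /= lexx tT.
have hub : ubound [set Yf u | u in `[t, T]] (Yf t + delta / 2).
  by move=> y' [u] uin <-; move: uin; rewrite /= in_itv /= => /andP[tu _]; apply: step.
have h1 : sup [set Yf u | u in `[t, T]] <= Yf t + delta / 2 by apply: ge_sup.
have h2 : Yf t <= sup [set Yf u | u in `[t, T]].
  apply: ub_le_sup; first by exists (Yf t + delta / 2).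
  by exists t => //=; rewrite in_itv /= lexx tT.
rewrite ger0_norm; lra.
Qed.
Lemma bound_N d (Om : measurableType d) (R : realType) (P : probability Om R)
  (E U : nat -> Om -> R) (a phi delta T : R) (N z0 : nat) :
  0 < a -> 0 < phi -> 0 < delta -> 1 <= ln (N%:R : R) -> (z0 <= N)%N -> 0 <= T ->
  (forall n, measurable_fun setT (E n)) ->
  (forall n, measurable_fun setT (U n)) ->
  (forall n x, 0 <= x <= 1 -> P [set w | U n w <= x] = x%:E) ->
  mutually_independent P
    (fun i : nat + nat => match i with inl n => E n | inr n => U n end) ->
  (P [set w | (delta < sup [set `|sup [set logNp R N (chain a phi z0 (fun n => E n w) (fun n => U n w) (u / phi * ln (N%:R : R))) | u in `[t, T]]
            - logNp R N (chain a phi z0 (fun n => E n w) (fun n => U n w) (t / phi * ln (N%:R : R)))| | t in `[0, T]])%R]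
    <= ((1 + ln (N%:R : R)) / expR (delta / 2 * ln (N%:R : R)))%:E)%E.
Proof.
move=> a0 p0 d0 lN zN T0 mE mU hU hind.
have lN0 : 0 < ln (N%:R : R) by lra.
set K := expR (delta / 2 * ln (N%:R : R)).
have K0 : 0 < K by apply: expR_gt0.
set pp := (2 + a * phi)^-1.
have hpp : 0 <= pp <= 2^-1.
  have h2 : 2 <= 2 + a * phi by rewrite lerDl; apply: mulr_ge0; apply: ltW.
  apply/andP; split; first by rewrite invr_ge0; lra.
  by rewrite lef_pV2 ?posrE //; lra.
have [mB PB] := @P_BadU _ _ _ P E U K pp z0 mU hU hind K0 hpp.
set S := [set w | _].
have mS' : measurable S.
  apply: (@mS _ _ _ (fun w t => logNp R N (chain a phi z0 (fun n => E n w) (fun n => U n w) (t / phi * ln (N%:R : R))))) => //.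
    by move=> t; apply: mY.
  by move=> w; apply: rconst_Y => //; apply: ltW.
have SB : S `<=` [set w | exists n, badrun K (z0, z0) (bits pp (fun j => U j w) n)].
  move=> w Sw /=; apply/not_existsP => hn.
  have hg : forall n, ~~ badrun K (z0, z0) (bits pp (fun j => U j w) n).
    by move=> n; apply/negP => h; apply: (hn n).
  have := @det_sup R a phi delta T N z0 (fun n => E n w) (fun n => U n w) p0 lN0 d0 hg.
  move: Sw; rewrite /S /=; lra.
have hle : (P S <= P [set w | exists n, badrun K (z0, z0) (bits pp (fun j => U j w) n)])%E.
  by apply: le_measure => //; rewrite inE.
apply: le_trans hle _.
apply: le_trans PB _; rewrite lee_fin /Vf /=.
case: eqP => [_|/eqP z00]; first by apply: divr_ge0; [lra|exact: ltW].
rewrite ler_pM2r ?invr_gt0 // divff ?pnatr_eq0 // lerD2l.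
have z0p : (0 < z0)%N by rewrite lt0n.
by rewrite ler_ln ?posrE ?ltr0n ?ler_nat // (leq_trans z0p).
Qed.
Lemma num_bound (R : realType) (c e x : R) : 0 < c -> 0 < e ->
  2 * (1 + 2 / c) / (c * e) <= x -> 0 <= x -> (1 + x) / expR (c * x) <= e.
Proof.
move=> c0 e0 hx x0.
set y := c * x / 2.
have y0 : 0 <= y by rewrite /y; apply: divr_ge0 => //; apply: mulr_ge0 => //; exact: ltW.
have hexp : (1 + y) * (1 + y) <= expR (c * x).
  have -> : c * x = y + y by rewrite /y; field.
  rewrite expRD; apply: ler_pM; try lra; exact: expR_ge1Dx.
have xy : x = 2 * y / c by rewrite /y; field; exact: lt0r_neq0.
have hey : 1 + 2 / c <= e * y.
  move: hx; rewrite ler_pdivrMr ?mulr_gt0 // /y.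
  have -> : x * (c * e) = e * (c * x / 2) * 2 by field.
  lra.
have ic : 0 < 2 / c by apply: divr_gt0.
have h1 : 1 + x <= e * ((1 + y) * (1 + y)).
  rewrite xy.
  have -> : 2 * y / c = y * (2 / c) by rewrite [RHS]mulrA [y * 2]mulrC.
  nra.
rewrite ler_pdivrMr ?expR_gt0 //.
apply: le_trans h1 _; rewrite ler_pM2l //.
Qed.
Lemma near_ln (R : realType) (M : R) : \forall N \near \oo, M <= ln (N%:R : R).
Proof.
exists (Num.truncn (expR M)).+1 => // N /= hN.
have hN' : expR M < N%:R.
  have := truncn_itv (expR_ge0 M); move=> /andP[_ h]; apply: (lt_le_trans h).
  by rewrite ler_nat.
rewrite -[M]expRK ler_ln ?posrE ?expR_gt0 //; first exact: ltW.
exact: lt_trans (expR_gt0 M) hN'.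
Qed.

Theorem lemma4p14 (R : realType) (a b : R) (phi : nat -> R)
  (d : measure_display) (Omega : measurableType d) (P : probability Omega R)
  (E U : nat -> Omega -> R) (eps : R) :
  0 < a ->
  (forall N, 0 < phi N <= 1) ->
  0 <= b < 1 ->
  (fun N : nat => - ln (phi N) / ln (N%:R : R)) @ \oo --> b ->
  (* E n ~ Exp(1), U n ~ Unif[0,1], all mutually independent *)
  (forall n, measurable_fun setT (E n)) ->
  (forall n, measurable_fun setT (U n)) ->
  (forall n x, 0 <= x -> P [set w | x < E n w] = (expR (- x))%:E) ->
  (forall n x, 0 <= x <= 1 -> P [set w | U n w <= x] = x%:E) ->
  mutually_independent P
    (fun i : nat + nat => match i with inl n => E n | inr n => U n end) ->
  0 < eps ->
  let T := (1 - b) / a + eps in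
  let Y := fun (N : nat) (w : Omega) (t : R) =>
    logNp R N (chain a (phi N) (Num.truncn ((N%:R : R) / Num.sqrt (ln (N%:R : R))))
                 (fun n => E n w) (fun n => U n w) (t / phi N * ln (N%:R : R))) in
  let Yt := fun (N : nat) (w : Omega) (t : R) =>
    sup [set Y N w u | u in `[t, T]] in
  forall delta : R, 0 < delta ->
    (fun N : nat =>
       P [set w | delta < sup [set `|Yt N w t - Y N w t| | t in `[0, T]]])
      @ \oo --> 0%E.
Proof.
move=> a0 hphi /andP[b0 b1] _ mE mU _ hU hind eps0 T Y Yt delta d0.
have T0 : 0 <= T by rewrite /T; apply: addr_ge0; [apply: divr_ge0; lra|lra].
have c0 : 0 < delta / 2 by lra.
have key : forall N, 1 <= ln (N%:R : R) ->
  (P [set w | (delta < sup [set `|Yt N w t - Y N w t| | t in `[0, T]])%R]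
    <= ((1 + ln (N%:R : R)) / expR (delta / 2 * ln (N%:R : R)))%:E)%E.
  move=> N lN.
  have p0 : 0 < phi N by have /andP[] := hphi N.
  set z0 := Num.truncn ((N%:R : R) / Num.sqrt (ln (N%:R : R))).
  have zN : (z0 <= N)%N.
    have s1 : 1 <= Num.sqrt (ln (N%:R : R)).
      by rewrite -[leLHS]sqrtr1 ler_sqrt //; lra.
    have x0 : 0 <= (N%:R : R) / Num.sqrt (ln (N%:R : R)) by apply: divr_ge0; [exact: ler0n|exact: sqrtr_ge0].
    rewrite -(@ler_nat R); apply: le_trans (_ : _ <= (N%:R : R) / Num.sqrt (ln (N%:R : R))) _.
      by rewrite truncn_le.
    by rewrite ler_pdivrMr ?(lt_le_trans ltr01) // ler_peMr.
  exact: (@bound_N _ _ _ P E U a (phi N) delta T N z0 a0 p0 d0 lN zN T0 mE mU hU hind).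
apply: cvg_EFin.
  near=> N.
  have lN : 1 <= ln (N%:R : R) by near: N; apply: near_ln.
  have := key N lN; move=> h.
  rewrite ge0_fin_numE ?measure_ge0 //; apply: le_lt_trans h _; exact: ltey.
apply/cvgrPdist_le => e e0.
near=> N.
have lN : Num.max 1 (2 * (1 + 2 / (delta / 2)) / (delta / 2 * e)) <= ln (N%:R : R).
  by near: N; apply: near_ln.
have lN1 : 1 <= ln (N%:R : R) by apply: le_trans lN; rewrite le_max lexx.
have lNM : 2 * (1 + 2 / (delta / 2)) / (delta / 2 * e) <= ln (N%:R : R).
  by apply: le_trans lN; rewrite le_max lexx orbT.
have h := key N lN1.
have g0 := @measure_ge0 _ _ _ P [set w | (delta < sup [set `|Yt N w t - Y N w t| | t in `[0, T]])%R].
have fin : P [set w | (delta < sup [set `|Yt N w t - Y N w t| | t in `[0, T]])%R] \is a fin_num.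
  by rewrite ge0_fin_numE //; apply: le_lt_trans h _; exact: ltey.
rewrite sub0r normrN /= ger0_norm; last by rewrite fine_ge0.
rewrite -lee_fin fineK //; apply: le_trans h _; rewrite lee_fin.
apply: num_bound => //; lra.
Unshelve. all: by end_near.
Qed.
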